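(* Let $k\ge1$ be an odd integer and let $a$ be a positive integer. Then $$\binom{2ka-1}{2k-1}\equiv(-1)^{a+1}\binom{ka-1}{k-1}\pmod 4.$$ *)

(* Defs.v *)
From mathcomp Require Import all_boot all_order all_algebra.

(* Main.v *)
Require Import Defs.
From mathcomp Require Import all_boot all_order all_algebra.
From mathcomp Require Import zify ring.
Import GRing.Theory Num.Theory.
Lemma binid n m : 'C(n.*2.+1, m.*2.+1) * \prod_(i < m.+1) (i.*2.+1)
   = 'C(n, m) * \prod_(i < m.+1) (n.*2.+1 - i.*2).
Proof.
elim: m => [|m IH]; first by rewrite !big_ord1 /= bin1 bin0 muln1 mul1n subn0.
rewrite (big_ord_recr m.+1) (big_ord_recr m.+1) /=.
have h1 := mul_bin_left n.*2.+1 m.*2.+1.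
have h2 := mul_bin_left n.*2.+1 (m.*2.+1).+1.
have h3 := mul_bin_left n m.
have -> : (m.+1).*2.+1 = (m.*2.+1).+2 by rewrite doubleS.
have e1 : n.*2.+1 - m.*2.+1 = 2 * (n - m) by lia.
rewrite e1 in h1.
have e2 : (n.*2.+1 - (m.+1).*2) = (n.*2.+1 - (m.*2.+1).+1) by rewrite doubleS.
rewrite e2.
move: IH h1 h2 h3.
set A1 := 'C(n.*2.+1, m.*2.+1).
set A2 := 'C(n.*2.+1, (m.*2.+1).+1).
set A3 := 'C(n.*2.+1, (m.*2.+1).+2).
set B0 := 'C(n, m). set B1 := 'C(n, m.+1).
set P := \prod_(i < m.+1) _. set Q := \prod_(i < m.+1) _.
set d2 := n.*2.+1 - _. set d := n - m.
move=> IH h1 h2 h3.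
apply/eqP; rewrite -(eqn_pmul2l (_ : 0 < (m.*2.+1).+1)) //; apply/eqP.
transitivity ((m.*2.+1).+1 * P * ((m.*2.+1).+2 * A3)); first by clearbody A1 A2 A3 B0 B1 P Q d2 d; ring.
rewrite h2.
transitivity (d2 * P * ((m.*2.+1).+1 * A2)); first by clearbody A1 A2 A3 B0 B1 P Q d2 d; ring.
rewrite h1.
transitivity (d2 * 2 * d * (A1 * P)); first by clearbody A1 A2 A3 B0 B1 P Q d2 d; ring.
rewrite IH.
have e : (m.*2.+1).+1 = 2 * m.+1 by lia.
rewrite e; symmetry.
transitivity (2 * d2 * Q * (m.+1 * B1)); first by clearbody A1 A2 A3 B0 B1 P Q d2 d; ring.
rewrite h3; clearbody A1 A2 A3 B0 B1 P Q d2 d; ring.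
Qed.
Local Open Scope ring_scope.

Lemma prodcong (f g : nat -> nat) (c : int) (m : nat) :
  (forall i, (i < m)%N -> exists w : int, (f i)%:Z = c * (g i)%:Z + 4 * w) ->
  exists W : int, (\prod_(i < m) f i)%:Z = c ^+ m * (\prod_(i < m) g i)%:Z + 4 * W.
Proof.
elim: m => [|m IH] H; first by exists 0; rewrite !big_ord0 expr0 mul1r mulr0 addr0.
have [W hW] : exists W : int, (\prod_(i < m) f i)%:Z = c ^+ m * (\prod_(i < m) g i)%:Z + 4 * W.
  by apply: IH => i hi; apply: H; exact: (ltn_trans hi (ltnSn m)).
have [w hw] := H m (ltnSn m).
exists (W * c * (g m)%:Z + c ^+ m * (\prod_(i < m) g i)%:Z * w + 4 * W * w).
rewrite !big_ord_recr /= !PoszM hW hw exprSr; ring.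
Qed.

Theorem lemma3p2 (k a : nat) (hk : odd k) (ha : (0 < a)%N) :
  ((('C(2 * k * a - 1, 2 * k - 1))%:Z)
     = (-1) ^+ (a + 1) * (('C(k * a - 1, k - 1))%:Z) %[mod 4])%Z.
Proof.
have k0 : (0 < k)%N by case: k hk.
have ka0 : (0 < k * a)%N by rewrite muln_gt0 k0.
have hid := binid (k * a - 1) (k - 1).
have E1 : ((k * a - 1).*2.+1 = 2 * k * a - 1)%N by lia.
have E2 : ((k - 1).*2.+1 = 2 * k - 1)%N by lia.
have E3 : ((k - 1).+1 = k)%N by lia.
rewrite E1 E2 E3 in hid.
set X := 'C(2 * k * a - 1, 2 * k - 1) in hid *.
set Y := 'C(k * a - 1, k - 1) in hid *.
set c : int := (-1) ^+ (a + 1).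
have [W hW] : exists W : int,
    (\prod_(i < k) ((2 * k * a - 1) - i.*2)%N)%:Z = c ^+ k * (\prod_(i < k) (i.*2.+1))%:Z + 4 * W.
  apply: (prodcong (fun i => (2 * k * a - 1 - i.*2)%N) (fun i => i.*2.+1)) => i hi.
  have hka : (i < k * a)%N by apply: leq_trans hi _; rewrite leq_pmulr.
  rewrite /c; case: (boolP (odd a)) => oa.
    have oka : odd (k * a) by rewrite oddM hk oa.
    have hh := odd_double_half (k * a); rewrite oka /= in hh.
    exists (((k * a)./2)%:Z - i%:Z); rewrite -signr_odd oddD oa /= expr0 mul1r.
    lia.
  have oka : ~~ odd (k * a) by rewrite oddM hk (negbTE oa).
  have hh := odd_double_half (k * a); rewrite (negbTE oka) /= in hh.
  exists (((k * a)./2)%:Z); rewrite -signr_odd oddD (negbTE oa) /= expr1 mulN1r.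
  lia.
have ck : c ^+ k = c.
  rewrite /c -signr_odd oddD; case: (odd a) => /=; first by rewrite expr0 expr1n.
  by rewrite expr1 -signr_odd hk expr1.
rewrite ck in hW.
move: hid hW.
set D := \prod_(i < k) i.*2.+1.
set N := \prod_(i < k) _.
move=> hid hW.
have oD : odd D.
  apply: (big_ind odd) => //= [x y ox oy|i _]; first by rewrite oddM ox oy.
  by rewrite odd_double.
have hD := odd_double_half D; rewrite oD /= in hD.
have hidZ : X%:Z * D%:Z = Y%:Z * N%:Z by rewrite -!PoszM hid.
have hc : c * c = 1 by rewrite /c -exprD -signr_odd addnn odd_double.
set t := (D./2)%:Z.
have hDZ : D%:Z = 1 + 2 * t by rewrite /t; lia.
have key : X%:Z = c * Y%:Z + 4 * (c * Y%:Z * (t * t + t) + W * Y%:Z * D%:Z - (t * t + t) * X%:Z).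
  have e1 : X%:Z * (D%:Z * D%:Z) = X%:Z + 4 * ((t * t + t) * X%:Z) by rewrite hDZ; ring.
  have e2 : X%:Z * (D%:Z * D%:Z) = c * Y%:Z * (D%:Z * D%:Z) + 4 * (W * Y%:Z * D%:Z).
    by rewrite mulrA hidZ hW; ring.
  have e3 : c * Y%:Z * (D%:Z * D%:Z) = c * Y%:Z + 4 * (c * Y%:Z * (t * t + t)) by rewrite hDZ; ring.
  rewrite e3 in e2; rewrite e2 in e1.
  by rewrite -[X%:Z in LHS](addrK (4 * ((t * t + t) * X%:Z))) -e1; ring.
by rewrite key addrC mulrC modzMDl.
Qed.
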